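(* Fix a task index $t\in\{1,2,\dots\}$ with input dimension $M_t$, output dimension $C_t$, compact domain $D_t\subset\mathbb{R}^{M_t}$, and target function $f=[f_1,\dots,f_{C_t}]\in L_2(D_t)$. Suppose that $\mathrm{span}(\Gamma)$ is dense in $L_2$ space and that, for all $g\in\Gamma$, $G$ is a collection of some $g$ with nonlinear activation. Let $0<r(t)<1$ and let $\{\mu_L(t)\}_{L\ge 1}$ be a non-negative real sequence with $\lim_{L\to+\infty}\mu_L(t)=0$ and $\mu_L(t)\le 1-r(t)$ for all $L$. Let $l\in\mathbb{N}^+$ be a step size. Nodes $g_1,g_2,\dots\in\Gamma$ are added to the network in batches of $l$; for $L=1,2,\dots$ (with $L$ running over the batch endpoints) set $$\delta_L^\star(t)=\sum_{c=1}^{C_t}\delta_{L,c}^\star(t),\qquad \delta_{L,c}^\star(t)=(1-r(t)-\mu_L(t))\,\|e_{L-l,c}^\star(t)\|^2 .$$ Suppose that each new batch of nodes $G_l=[g_{L-l+1},\dots,g_L]$ (with $g_j(x)=g(xw_j+b_j)$, i.e. $G_l=G_l(X_tW_l+B_l)$ with randomly generated weights $W_l$ and biases $B_l$) is chosen so that $$\langle e_{L-l,c}^\star(t),\,G_l\beta_{l,c}(t)\rangle\ \ge\ \delta_{L,c}^\star(t),\qquad c=1,2,\dots,C_t,$$ and is connected to the existing network through output weights determined in the least-squares sense $$[\beta_1^\star(t),\dots,\beta_L^\star(t)]=\arg\min_{\beta(t)}\Big\|f-\sum_{j=1}^{L}\beta_j(t)g_j\Big\|.$$ Then $\lim_{L\to+\infty}\|f-f_L^\star\|=0$,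 where $f_L^\star=f_{L-l}^\star+\beta_l^\star(t)G_l=\sum_{j=1}^L\beta_j^\star(t)g_j$.
   Context: $\Gamma=\{g_1,g_2,\dots\}$ is a set of bounded nonconstant piecewise continuous functions and $\mathrm{span}(\Gamma)$ is the function space spanned by $\Gamma$. $L_2(D_t)$ is the space of Lebesgue measurable $f=[f_1,\dots,f_{C_t}]:\mathbb{R}^{M_t}\to\mathbb{R}^{C_t}$ on $D_t$ with norm $\|f\|=\big(\sum_{c=1}^{C_t}\int_{D_t}|f_c(x)|^2dx\big)^{1/2}<\infty$, and inner product $\langle f,\vartheta\rangle=\sum_{c=1}^{C_t}\langle f_c,\vartheta_c\rangle=\sum_{c=1}^{C_t}\int_{D_t}f_c(x)\vartheta_c(x)\,dx$; for scalar-valued functions the inner product is $\int_{D_t}f_c\vartheta_c\,dx$. Each output weight $\beta_j(t)\in\mathbb{R}^{1\times C_t}$ is a row vector, so $\beta_j(t)g_j$ is $\mathbb{R}^{C_t}$-valued. The optimal residual after $L$ nodes is $e_L^\star(t)=f-\sum_{j=1}^L\beta_j^\star(t)g_j$ with $e_0^\star(t)=f$, and $e_{L,c}^\star(t)$ denotes its $c$-th component. For the batch $G_l=[g_{L-l+1},\dots,g_L]$ and a coefficient vector $\beta=(\beta_{L-l+1},\dots,\beta_L)^{\mathrm T}\in\mathbb{R}^l$, $G_l\beta=\sum_{j=L-l+1}^{L}\beta_jg_j$. The intermediate output weights are $\beta_{l,c}(t)=(G_l^{\mathrm T}G_l)^\dagger G_l^{\mathrm T}e_{L-l,c}^\star(t)$,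 i.e. the least-squares coefficients of $e_{L-l,c}^\star(t)$ on $g_{L-l+1},\dots,g_L$, where $G_l^{\mathrm T}G_l$ is the Gram matrix $(\langle g_i,g_j\rangle)_{i,j}$, $G_l^{\mathrm T}e$ is the vector $(\langle g_j,e\rangle)_j$, and $^\dagger$ denotes the Moore–Penrose pseudoinverse. *)

(* Defs.v *)
From mathcomp Require Import all_boot all_order all_algebra.
From mathcomp Require Import all_classical all_reals all_analysis.
Import Order.TTheory GRing.Theory Num.Theory numFieldNormedType.Exports.

Set Implicit Arguments.
Unset Strict Implicit.
Unset Printing Implicit Defensive.

Local Open Scope classical_set_scope.
Local Open Scope ring_scope.

(* Points of R^M are represented as M.-tuple R, which MathComp-Analysis equips
   with the product (Borel) sigma-algebra generated by the coordinates.
   The topology of R^M is taken from 'rV[R]_M via the coordinate bijection. *)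

Definition torow (R : realType) (M : nat) (x : M.-tuple R) : 'rV[R]_M :=
  \row_i tnth x i.

Definition fromrow (R : realType) (M : nat) (v : 'rV[R]_M) : M.-tuple R :=
  [tuple v ord0 i | i < M].

Definition is_lebesgue_Rn (R : realType) (M : nat)
    (mu : {measure set (M.-tuple R) -> \bar R}) : Prop :=
  forall a b : M.-tuple R, (forall i, tnth a i <= tnth b i) ->
    mu [set x | forall i, tnth a i <= tnth x i <= tnth b i] =
    (\prod_(i < M) (tnth b i - tnth a i))%:E.

Definition Rn_compact (R : realType) (M : nat) (D : set (M.-tuple R)) : Prop :=
  compact (@torow R M @` D).

Definition bounded_Rn (R : realType) (M : nat) (h : M.-tuple R -> R) : Prop :=
  exists K : R, forall x, `|h x| <= K.

Definition nonconstant_Rn (R : realType) (M : nat) (h : M.-tuple R -> R) : Prop :=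
  exists x y, h x <> h y.

Definition piecewise_continuous_Rn (R : realType) (M : nat)
    (h : M.-tuple R -> R) : Prop :=
  exists (n : nat) (P : 'I_n -> set (M.-tuple R)),
    (forall i, measurable (P i)) /\
    (forall x, exists i, P i x) /\
    (forall i, {within @torow R M @` P i, continuous (h \o @fromrow R M)}).

Definition admissible_Gamma (R : realType) (M : nat)
    (Gamma : set (M.-tuple R -> R)) : Prop :=
  forall h, Gamma h ->
    [/\ bounded_Rn h, nonconstant_Rn h & piecewise_continuous_Rn h].

Definition isL2 (R : realType) (M : nat)
    (mu : {measure set (M.-tuple R) -> \bar R}) (D : set (M.-tuple R))
    (h : M.-tuple R -> R) : Prop :=
  measurable_fun D h /\ (\int[mu]_(x in D) ((h x) ^+ 2)%:E < +oo)%E.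

Definition ip (R : realType) (M : nat)
    (mu : {measure set (M.-tuple R) -> \bar R}) (D : set (M.-tuple R))
    (h k : M.-tuple R -> R) : R :=
  Rintegral mu D (fun x => h x * k x).

Definition nsq (R : realType) (M : nat)
    (mu : {measure set (M.-tuple R) -> \bar R}) (D : set (M.-tuple R))
    (h : M.-tuple R -> R) : R := ip mu D h h.

Definition vnorm (R : realType) (M C : nat)
    (mu : {measure set (M.-tuple R) -> \bar R}) (D : set (M.-tuple R))
    (F : 'I_C -> M.-tuple R -> R) : R :=
  Num.sqrt (\sum_(c < C) nsq mu D (F c)).

Definition span_dense (R : realType) (M : nat)
    (mu : {measure set (M.-tuple R) -> \bar R}) (D : set (M.-tuple R))
    (Gamma : set (M.-tuple R -> R)) : Prop :=
  forall h, isL2 mu D h -> forall eps : R, 0 < eps ->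
    exists (n : nat) (a : 'I_n -> R) (gs : 'I_n -> M.-tuple R -> R),
      (forall i, Gamma (gs i)) /\
      Num.sqrt (nsq mu D (fun x => h x - \sum_(i < n) a i * gs i x)) < eps.

Definition resid (R : realType) (M C : nat)
    (f : 'I_C -> M.-tuple R -> R) (g : nat -> M.-tuple R -> R) (L : nat)
    (beta : nat -> 'rV[R]_C) : 'I_C -> M.-tuple R -> R :=
  fun c x => f c x - \sum_(1 <= j < L.+1) beta j ord0 c * g j x.

Definition is_MP_pinv (R : realType) (n : nat) (A X : 'M[R]_n) : Prop :=
  [/\ A *m X *m A = A, X *m A *m X = X,
      (A *m X)^T = A *m X & (X *m A)^T = X *m A].

Definition gram (R : realType) (M : nat)
    (mu : {measure set (M.-tuple R) -> \bar R}) (D : set (M.-tuple R))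
    (g : nat -> M.-tuple R -> R) (L l : nat) : 'M[R]_l :=
  \matrix_(i < l, j < l) ip mu D (g (L - l + i.+1)%N) (g (L - l + j.+1)%N).

Definition gtv (R : realType) (M : nat)
    (mu : {measure set (M.-tuple R) -> \bar R}) (D : set (M.-tuple R))
    (g : nat -> M.-tuple R -> R) (L l : nat) (e : M.-tuple R -> R) : 'cV[R]_l :=
  \col_(i < l) ip mu D (g (L - l + i.+1)%N) e.

Definition batch_comb (R : realType) (M : nat)
    (g : nat -> M.-tuple R -> R) (L l : nat) (b : 'cV[R]_l) : M.-tuple R -> R :=
  fun x => \sum_(i < l) b i ord0 * g (L - l + i.+1)%N x.

(* Main.v *)
Require Import Defs.
From mathcomp Require Import all_boot all_order all_algebra.
From mathcomp Require Import all_classical all_reals all_analysis.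
From mathcomp Require Import ring lra zify measurable_realfun.
Import Order.TTheory GRing.Theory Num.Theory numFieldNormedType.Exports.
Set Implicit Arguments.
Unset Strict Implicit.
Unset Printing Implicit Defensive.
Local Open Scope classical_set_scope.
Local Open Scope ring_scope.
Section meas.
Variables (R : realType) (M : nat).

Definition box (q : {ffun 'I_M -> rat * rat}) : set (M.-tuple R) :=
  [set y | forall i, ratr (q i).1 < tnth y i < ratr (q i).2].

Lemma box_meas q : measurable (box q).
Proof.
have -> : box q = ~` \bigcup_(i : 'I_M) ~` ((fun y : M.-tuple R => tnth y i) @^-1` `]ratr (q i).1, ratr (q i).2[).
  apply/seteqP; split => y /=.
    move=> H [i _ /=]; apply; move: (H i); by rewrite in_itv.
  move=> H i; apply: contrapT => Hn; apply: H; exists i => //=; by rewrite in_itv /=; apply/negP.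
apply: measurableC; apply: countable_bigcupT_measurable; first exact: countableP.
move=> i; apply: measurableC.
have := @measurable_tnth _ R M i measurableT _ (measurable_itv `]ratr (q i).1, ratr (q i).2[).
by rewrite setTI.
Qed.

Lemma fromrowK (x : M.-tuple R) : fromrow (torow x) = x.
Proof. by apply: eq_from_tnth => i; rewrite tnth_mktuple mxE. Qed.

Lemma pc_meas (P : set (M.-tuple R)) (h : M.-tuple R -> R) :
  measurable P -> {within @torow R M @` P, continuous (h \o @fromrow R M)} ->
  measurable_fun P h.
Proof.
move=> mP ch.
apply: (measurability _ (measurable_realfun.RGenOpens.measurableE R)).
move=> _ [_ [a [b ->]] <-].
pose F q := if pselect (forall y, P y -> box q y -> h y \in `]a, b[) then box q else set0.
have -> : P `&` h @^-1` `]a, b[ = P `&` \bigcup_q F q.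
  apply/seteqP; split => x /= [Px hx]; split => //; last first.
    case: hx => q _; rewrite /F; case: pselect => // H; exact: H.
  have := (subspace_continuousP _ _).1 ch (torow x) (ex_intro2 _ _ x Px erefl).
  move=> /(_ `]a, b[%classic).
  have : nbhs ((h \o @fromrow R M) (torow x)) `]a, b[%classic.
    by apply: open_nbhs_nbhs; split; [exact: interval_open|rewrite /= fromrowK].
  move=> HN /(_ HN); rewrite nbhs_simpl /= => /nbhs_ballP [e /= e0 He].
  have : forall i : 'I_M, exists qq : rat * rat,
      tnth x i - e < ratr qq.1 < tnth x i /\ tnth x i < ratr qq.2 < tnth x i + e.
    move=> i.
    have h1 : tnth x i - e < tnth x i by rewrite ltrBlDr ltrDl.
    have h2 : tnth x i < tnth x i + e by rewrite ltrDl.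
    have [q1 H1] := rat_in_itvoo h1.
    have [q2 H2] := rat_in_itvoo h2.
    move: H1 H2; rewrite !in_itv /= => H1 H2; exists (pair q1 q2); by [].
  move=> /choice [qf Hq].
  exists [ffun i => qf i] => //.
  rewrite /F; case: pselect => H.
    by move=> i; rewrite ffunE; have [/andP[_ ->] /andP[-> _]] := Hq i.
  exfalso; apply: H => y Py By.
  have := He (torow y); rewrite /from_subspace /= fromrowK; apply; last by exists y.
  split => //= i j; rewrite !mxE.
  have := By j; rewrite ffunE; have [/andP[H1 H1'] /andP[H2' H2]] := Hq j.
  move=> /andP[H3 H4].
  rewrite /ball /= ltr_norml; apply/andP; split; lra.
apply: measurableI => //; apply: countable_bigcupT_measurable; first exact: countableP.
by move=> q; rewrite /F; case: pselect => ? /=; [exact: box_meas|exact: measurable0].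
Qed.
End meas.
Section L2.
Variables (R : realType) (M : nat) (mu : {measure set (M.-tuple R) -> \bar R})
  (D : set (M.-tuple R)) (mD : measurable D).

Definition L2 (u : M.-tuple R -> R) :=
  measurable_fun D u /\ mu.-integrable D (EFin \o (fun x => u x ^+ 2)).

Lemma normM_le (u v : R) : `|u * v| <= u ^+ 2 + v ^+ 2.
Proof. rewrite ler_norml; apply/andP; split; nra. Qed.

Lemma L2_prod u v : L2 u -> L2 v -> mu.-integrable D (EFin \o (fun x => u x * v x)).
Proof.
move=> [mu1 iu] [mv iv].
have iuv : mu.-integrable D (EFin \o (fun x => u x ^+ 2 + v x ^+ 2)).
  have := integrableD mD iu iv; apply: eq_integrable => // x _ /=.
apply: le_integrable iuv => //.
  by apply/measurable_EFinP; apply: measurable_funM.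
move=> x Dx /=; rewrite lee_fin (ger0_norm (_ : 0 <= u x ^+ 2 + v x ^+ 2)); last first.
  by rewrite addr_ge0 // sqr_ge0.
exact: normM_le.
Qed.

Lemma L2_add u v : L2 u -> L2 v -> L2 (fun x => u x + v x).
Proof.
move=> [mu1 iu] [mv iv]; split; first exact: measurable_funD.
have iuv : mu.-integrable D (EFin \o (fun x => 2 * u x ^+ 2 + 2 * v x ^+ 2)).
  have := integrableD mD (integrableZl mD 2 iu) (integrableZl mD 2 iv).
  by apply: eq_integrable => // x _ /=.
apply: le_integrable iuv => //.
  by apply/measurable_EFinP; apply: measurable_funX; apply: measurable_funD.
move=> x Dx /=; rewrite lee_fin !ger0_norm; first by have := sqr_ge0 (u x - v x); rewrite !expr2; nra.
  by rewrite addr_ge0 // mulr_ge0 // sqr_ge0.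
exact: sqr_ge0.
Qed.

Lemma L2_scale (c : R) u : L2 u -> L2 (fun x => c * u x).
Proof.
move=> [mu1 iu]; split; first exact: measurable_funM.
have := integrableZl mD (c ^+ 2) iu; apply: eq_integrable => // x _ /=.
by rewrite exprMn.
Qed.

Lemma L2_0 : L2 (fun _ => 0).
Proof.
split; first exact: measurable_cst.
have := integrable0 mu D; apply: eq_integrable => // x _ /=.
by rewrite expr0n.
Qed.

Lemma L2_sum (I : Type) (r : seq I) (P : pred I) (a : I -> R) (F : I -> M.-tuple R -> R) :
  (forall i, L2 (F i)) -> L2 (fun x => \sum_(i <- r | P i) a i * F i x).
Proof.
move=> HF; elim: r => [|i r IH].
  by under eq_fun do rewrite big_nil; exact: L2_0.
under eq_fun do rewrite big_cons.
case: (P i).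
  by apply: L2_add => //; apply: L2_scale.
exact: IH.
Qed.

Lemma L2_sub u v : L2 u -> L2 v -> L2 (fun x => u x - v x).
Proof.
move=> hu hv; have := L2_add hu (L2_scale (-1) hv).
by under eq_fun do rewrite mulN1r.
Qed.

Lemma ip_sym u v : ip mu D u v = ip mu D v u.
Proof. by rewrite /ip; under eq_Rintegral do rewrite mulrC. Qed.

Lemma ip_addl u v w : L2 u -> L2 v -> L2 w ->
  ip mu D (fun x => u x + v x) w = ip mu D u w + ip mu D v w.
Proof.
move=> hu hv hw; rewrite /ip; under eq_Rintegral do rewrite mulrDl.
by rewrite RintegralD //; apply: L2_prod.
Qed.

Lemma ip_scalel c u w : L2 u -> L2 w ->
  ip mu D (fun x => c * u x) w = c * ip mu D u w.
Proof.
move=> hu hw; rewrite /ip; under eq_Rintegral do rewrite -mulrA.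
by rewrite RintegralZl //; apply: L2_prod.
Qed.

Lemma ip_subl u v w : L2 u -> L2 v -> L2 w ->
  ip mu D (fun x => u x - v x) w = ip mu D u w - ip mu D v w.
Proof.
move=> hu hv hw; rewrite /ip; under eq_Rintegral do rewrite mulrBl.
by rewrite RintegralB //; apply: L2_prod.
Qed.

Lemma ip_0l w : ip mu D (fun _ => 0) w = 0.
Proof.
rewrite /ip; under eq_Rintegral do rewrite mul0r.
by rewrite Rintegral_cst // mul0r.
Qed.

Lemma ip_suml (I : Type) (r : seq I) (P : pred I) (a : I -> R) (F : I -> M.-tuple R -> R) w :
  (forall i, L2 (F i)) -> L2 w ->
  ip mu D (fun x => \sum_(i <- r | P i) a i * F i x) w =
  \sum_(i <- r | P i) a i * ip mu D (F i) w.
Proof.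
move=> HF hw; elim: r => [|i r IH].
  rewrite big_nil; under eq_fun do rewrite big_nil; exact: ip_0l.
rewrite big_cons; under eq_fun do rewrite big_cons.
case: (P i); last exact: IH.
rewrite ip_addl //; [|exact: L2_scale|exact: L2_sum].
by rewrite ip_scalel // IH.
Qed.

Lemma nsq_ge0 u : 0 <= nsq mu D u.
Proof. by apply: Rintegral_ge0 => x _; rewrite -expr2 sqr_ge0. Qed.

End L2.

Section aux.
Variables (R : realType) (M : nat) (mu : {measure set (M.-tuple R) -> \bar R})
  (D : set (M.-tuple R)) (mD : measurable D).

Lemma L2_bounded (u : M.-tuple R -> R) (K : R) :
  (mu D < +oo)%E -> measurable_fun D u -> (forall x, `|u x| <= K) -> L2 mu D u.
Proof.
move=> finD mu1 Hu; split => //.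
apply/integrableP; split.
  by apply/measurable_EFinP; apply: measurable_funX.
apply: (@le_lt_trans _ _ (\int[mu]_(x in D) (cst (K ^+ 2)%:E) x)%E).
  apply: ge0_le_integral => //.
  - apply: measurableT_comp => //; apply/measurable_EFinP; exact: measurable_funX.
  - move=> x _ /=; rewrite lee_fin ger0_norm ?sqr_ge0 //.
    have h := Hu x; have h0 := normr_ge0 (u x).
    rewrite -[u x ^+ 2]real_normK ?num_real // !expr2; nra.
by rewrite integral_cst //= lte_mul_pinfty // lee_fin sqr_ge0.
Qed.

Lemma L2_isL2 u : isL2 mu D u -> L2 mu D u.
Proof.
move=> [mu1 fin]; split => //; apply/integrableP; split.
  by apply/measurable_EFinP; apply: measurable_funX.
apply: le_lt_trans fin; apply: ge0_le_integral => //.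
- apply: measurableT_comp => //; apply/measurable_EFinP; exact: measurable_funX.
- apply/measurable_EFinP; exact: measurable_funX.
- by move=> x ? /=; rewrite ger0_norm ?sqr_ge0.
Qed.

Lemma pwc_meas (h : M.-tuple R -> R) : piecewise_continuous_Rn h -> measurable_fun D h.
Proof.
move=> [n [P [mP [cov cont]]]].
apply: (measurable_funS measurableT) => //.
move=> _ B mB; rewrite setTI.
have -> : h @^-1` B = \bigcup_(i : 'I_n) (P i `&` h @^-1` B).
  apply/seteqP; split => x /=.
    by move=> hx; have [i Pi] := cov x; exists i.
  by move=> [i _ []].
apply: countable_bigcupT_measurable; first exact: countableP.
move=> i; exact: (pc_meas (mP i) (cont i)).
Qed.

Lemma finD : is_lebesgue_Rn mu -> Rn_compact D -> (mu D < +oo)%E.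
Proof.
move=> leb cD.
have [K0 [_ HK]] := compact_bounded cD.
set c := `|K0| + 1.
have Kc : K0 < c by rewrite /c; apply: le_lt_trans (ler_norm K0) _; rewrite ltrDl.
have HKc := HK c Kc.
have bnd : forall x, D x -> forall i, - c <= tnth x i <= c.
  move=> x Dx i; have := HKc (torow x) (ex_intro2 _ _ x Dx erefl).
  move=> H.
  have : `|torow x ord0 i| <= c.
    apply: le_trans H; change (`|torow x ord0 i| <= mx_norm (torow x)); rewrite mx_normrE.
    exact: (le_bigmax _ _ (ord0, i)).
  by rewrite mxE -ler_norml.
pose a : M.-tuple R := [tuple - c | i < M].
pose b : M.-tuple R := [tuple c | i < M].
have ab : forall i, tnth a i <= tnth b i.
  by move=> i; rewrite !tnth_mktuple; have := normr_ge0 K0; rewrite /c; lra.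
have := leb a b ab.
set Bx := [set x | _] => muB.
have mB : measurable Bx.
  have -> : Bx = ~` \bigcup_(i : 'I_M) ~` ((fun y : M.-tuple R => tnth y i) @^-1` `[tnth a i, tnth b i]).
    apply/seteqP; split => y /=.
      move=> H [i _ /=]; apply; move: (H i); by rewrite in_itv.
    move=> H i; apply: contrapT => Hn; apply: H; exists i => //=; by rewrite in_itv /=; apply/negP.
  apply: measurableC; apply: countable_bigcupT_measurable; first exact: countableP.
  move=> i; apply: measurableC.
  have := @measurable_tnth _ R M i measurableT _ (measurable_itv `[tnth a i, tnth b i]).
  by rewrite setTI.
apply: (@le_lt_trans _ _ (mu Bx)).
  apply: le_measure; rewrite ?inE //.
  by move=> x Dx i; rewrite !tnth_mktuple; exact: bnd.
by rewrite muB ltry.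
Qed.

End aux.
Section mx.
Variables (R : realType) (n : nat).

Lemma MP_unique (A X Y : 'M[R]_n) : is_MP_pinv A X -> is_MP_pinv A Y -> X = Y.
Proof.
move=> [h1 h2 h3 h4] [k1 k2 k3 k4].
have eX : X = X *m A *m Y.
  have AT : A^T = A^T *m (A *m Y).
    by rewrite -{1}k1 trmx_mul k3.
  rewrite -{1}h2 -mulmxA -{1}h3 trmx_mul AT [X^T *m _]mulmxA -trmx_mul h3.
  by rewrite !mulmxA h2.
have eY : Y = X *m A *m Y.
  have AT : A^T = X *m A *m A^T.
    by rewrite -{1}h1 -mulmxA trmx_mul h4.
  rewrite -{1}k2 -{1}k4 trmx_mul AT -!mulmxA [A^T *m _]mulmxA -trmx_mul k4.
  by rewrite k2.
by rewrite eX -eY.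
Qed.

Lemma MP_sym (A X : 'M[R]_n) : A^T = A -> is_MP_pinv A X -> X^T = X.
Proof.
move=> AT [h1 h2 h3 h4]; apply: (@MP_unique A) => //; split.
- by have := congr1 trmx h1; rewrite !trmx_mul AT mulmxA.
- by have := congr1 trmx h2; rewrite !trmx_mul AT mulmxA.
- have e4 : A *m X^T = X *m A by rewrite -h4 trmx_mul AT.
  by rewrite e4 h4.
- have e3 : X^T *m A = A *m X by rewrite -h3 trmx_mul AT.
  by rewrite e3 h3.
Qed.

Lemma MP_quad (A X : 'M[R]_n) (v : 'cV[R]_n) : A^T = A -> is_MP_pinv A X ->
  (X *m v)^T *m A *m (X *m v) = (X *m v)^T *m v.
Proof.
move=> AT hX; have XT := MP_sym AT hX; case: hX => [h1 h2 h3 h4].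
by rewrite trmx_mul XT !mulmxA -(mulmxA (v^T *m X) A X) -(mulmxA v^T X) (mulmxA X A X) h2.
Qed.
End mx.

Section proj.
Variables (R : realType) (M : nat) (mu : {measure set (M.-tuple R) -> \bar R})
  (D : set (M.-tuple R)) (mD : measurable D) (g : nat -> M.-tuple R -> R) (L l : nat).

Lemma gram_sym : (gram mu D g L l)^T = gram mu D g L l.
Proof. by apply/matrixP => i j; rewrite !mxE ip_sym. Qed.

Lemma proj_step (e : M.-tuple R -> R) (X : 'M[R]_l) :
  (forall i : 'I_l, L2 mu D (g (L - l + i.+1)%N)) -> L2 mu D e ->
  is_MP_pinv (gram mu D g L l) X ->
  nsq mu D (fun x => e x - @batch_comb R M g L l (X *m gtv mu D g L l e) x) =
  nsq mu D e - ip mu D e (@batch_comb R M g L l (X *m gtv mu D g L l e)).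
Proof.
move=> HG He HX.
set v := gtv mu D g L l e; set b := X *m v; set h := @batch_comb R M g L l b.
have Lh : L2 mu D h by apply: L2_sum.
have ipe w : L2 mu D w -> ip mu D h w = \sum_(i < l) b i ord0 * ip mu D (g (L - l + i.+1)%N) w.
  by move=> Lw; rewrite /h /batch_comb ip_suml.
have hh : nsq mu D h = ip mu D e h.
  have := congr1 (fun m : 'M[R]_1 => m ord0 ord0) (MP_quad v gram_sym HX).
  rewrite -/b /= !mxE => Q.
  rewrite ip_sym ipe // /nsq ipe //.
  under eq_bigr do rewrite ip_sym ipe //.
  have R1 : \sum_(i < l) b i ord0 * ip mu D (g (L - l + i.+1)%N) e =
     \sum_j b^T ord0 j * v j ord0 by apply: eq_bigr => i _; rewrite !mxE.
  rewrite R1 -Q.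
  rewrite [RHS](eq_bigr (fun j => \sum_(i < l) b i ord0 * b j ord0 * gram mu D g L l i j)); last first.
    move=> j _; rewrite !mxE mulr_suml; apply: eq_bigr => i _; rewrite !mxE; ring.
  rewrite [RHS]exchange_big /=; apply: eq_bigr => i _; rewrite mulr_sumr.
  by apply: eq_bigr => j _; rewrite !mxE ip_sym; ring.
have Leh : L2 mu D (fun x => e x - h x) by apply: L2_sub.
rewrite /nsq (ip_subl mD He Lh Leh) ip_sym (ip_subl mD He Lh He).
rewrite (ip_sym mu D h (fun x => e x - h x)) (ip_subl mD He Lh Lh).
rewrite [ip mu D h e]ip_sym -/(nsq mu D h) hh /nsq; ring.
Qed.
End proj.

Lemma ev_of (R : realType) (u : nat -> R) (y : R) : u @ \oo --> y ->
  forall eps, 0 < eps -> exists N, forall n, (N <= n)%N -> `|y - u n| < eps.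
Proof.
move=> /cvgrPdist_lt H eps e0; have [N _ HN] := H eps e0.
by exists N => n Nn; apply: HN.
Qed.

Lemma conv (R : realType) (a m : nat -> R) (r : R) : 0 < r < 1 ->
  (forall k, 0 <= a k) -> (forall k, (0 < k)%N -> 0 <= m k) ->
  (forall eps, 0 < eps -> exists N, forall n, (N <= n)%N -> m n <= eps) ->
  (forall k, (0 < k)%N -> a k <= (r + m k) * a k.-1) ->
  forall eps, 0 < eps -> exists N, forall n, (N <= n)%N -> a n < eps.
Proof.
move=> /andP[r0 r1] a0 m0 hm step eps e0.
have [N HN] := hm ((1 - r) / 2) ltac:(by rewrite divr_gt0 // subr_gt0).
set q := (1 + r) / 2.
have q0 : 0 <= q by rewrite /q divr_ge0 //; lra.
have q1 : q < 1 by rewrite /q; lra.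
have geo n : a (N.+1 + n)%N <= q ^+ n * a N.+1.
  elim: n => [|n IH]; first by rewrite addn0 expr0 mul1r.
  rewrite addnS; apply: (le_trans (step (N.+1 + n).+1 isT)) => /=.
  rewrite exprS -mulrA; apply: ler_pM => //.
    by rewrite addr_ge0 ?m0 // ltW.
  have := HN (N.+1 + n).+1 ltac:(lia); rewrite /q; lra.
have := cvg_expr (_ : `|q| < 1); rewrite ger0_norm // => /(_ q1) /ev_of.
have aN0 := a0 N.+1.
move=> /(_ (eps / (a N.+1 + 1)) ltac:(rewrite divr_gt0 //; lra)) [n0 Hn0].
exists (N.+1 + n0)%N => n Nn.
have -> : n = (N.+1 + (n - N.+1))%N by lia.
apply: (le_lt_trans (geo _)).
have := Hn0 (n - N.+1)%N ltac:(lia); rewrite sub0r normrN ger0_norm ?exprn_ge0 // => Hq.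
have : q ^+ (n - N.+1) * (a N.+1 + 1) < eps.
  by rewrite -ltr_pdivlMr //; lra.
have := exprn_ge0 (n - N.+1) q0; nra.
Qed.

Lemma L2_sum_seq (R : realType) (M : nat) (mu : {measure set (M.-tuple R) -> \bar R})
  (D : set (M.-tuple R)) (mD : measurable D) (r : seq nat) (a : nat -> R) (F : nat -> M.-tuple R -> R) :
  (forall i, i \in r -> L2 mu D (F i)) -> L2 mu D (fun x => \sum_(i <- r) a i * F i x).
Proof.
elim: r => [|i r IH] HF.
  by under eq_fun do rewrite big_nil; exact: L2_0 mD.
under eq_fun do rewrite big_cons.
apply: (L2_add mD); first by apply: (L2_scale mD); apply: HF; rewrite mem_head.
by apply: IH => j jr; apply: HF; rewrite in_cons jr orbT.
Qed.

Theorem theorem2 (R : realType) (M C : nat)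
  (mu : {measure set (M.-tuple R) -> \bar R}) (D : set (M.-tuple R))
  (f : 'I_C -> M.-tuple R -> R) (Gamma : set (M.-tuple R -> R))
  (g : nat -> M.-tuple R -> R) (r : R) (muL : nat -> R) (l : nat)
  (betaS : nat -> nat -> 'rV[R]_C) :
  is_lebesgue_Rn mu ->
  Rn_compact D -> measurable D ->
  (forall c, isL2 mu D (f c)) ->
  admissible_Gamma Gamma ->
  span_dense mu D Gamma ->
  0 < r < 1 ->
  (forall L, (0 < L)%N -> 0 <= muL L <= 1 - r) ->
  muL @ \oo --> (0 : R) ->
  (0 < l)%N ->
  (forall j, (0 < j)%N -> Gamma (g j)) ->
  (* least-squares output weights after each batch, L = k * l *)
  (forall (k : nat) (beta : nat -> 'rV[R]_C),
     vnorm mu D (resid f g (k * l) (betaS k))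
       <= vnorm mu D (resid f g (k * l) beta)) ->
  (* supervisory inequality for each new batch, L = k * l, k >= 1 *)
  (forall k : nat, (0 < k)%N -> forall c : 'I_C,
     let e := resid f g (k.-1 * l) (betaS k.-1) c in
     exists X : 'M[R]_l,
       @is_MP_pinv R l (@gram R M mu D g (k * l) l) X /\
       ip mu D e (@batch_comb R M g (k * l) l (X *m @gtv R M mu D g (k * l) l e))
         >= (1 - r - muL (k * l)%N) * nsq mu D e) ->
  (fun k => vnorm mu D (resid f g (k * l) (betaS k))) @ \oo --> (0 : R).
Proof.
move=> leb cD mD fL2 adm dense rr muLb muL0 l0 Gg LS SUP.
have fin := finD mD leb cD.
have Lg j : (0 < j)%N -> L2 mu D (g j).
  move=> j0; have [[K HK] _ pc] := adm _ (Gg j j0).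
  exact: (L2_bounded mD fin (pwc_meas pc) HK).
have Lres L beta c : L2 mu D (resid f g L beta c).
  apply: (L2_sub mD); first exact: (L2_isL2 mD).
  apply: (L2_sum_seq mD) => j; rewrite mem_index_iota => /andP[j1 _]; exact: Lg.
pose a k := \sum_(c < C) nsq mu D (resid f g (k * l) (betaS k) c).
have a0 k : 0 <= a k by apply: sumr_ge0 => c _; exact: nsq_ge0.
have step k : (0 < k)%N -> a k <= (r + muL (k * l)%N) * a k.-1.
  move=> k0.
  have kl : (k * l = k.-1 * l + l)%N by case: k k0 => // k' _; rewrite mulSn addnC.
  have [Xf HX] := choice (SUP k k0).
  pose e c := resid f g (k.-1 * l) (betaS k.-1) c.
  pose b c := Xf c *m gtv mu D g (k * l) l (e c).
  pose m := (k.-1 * l)%N.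
  rewrite -/m in kl.
  pose beta' (j : nat) : 'rV[R]_C := \row_c (if (j <= m)%N then betaS k.-1 j ord0 c
     else odflt 0 (omap (fun i : 'I_l => b c i ord0) (insub (j - m.+1)%N))).
  have Hres c : resid f g (k * l) beta' c = (fun x => e c x - @batch_comb R M g (k * l) l (b c) x).
    apply: funext => x; rewrite /resid /e /batch_comb.
    rewrite kl (@big_cat_nat _ _ _ m.+1) //=; last lia.
    rewrite /resid -/m.
    rewrite (eq_big_nat _ _ (F2 := fun j => betaS k.-1 j ord0 c * g j x)); last first.
      by move=> j /andP[_ jm]; rewrite mxE ifT.
    have S2 : \sum_(m.+1 <= j < (m + l).+1) beta' j ord0 c * g j x =
              \sum_(i < l) b c i ord0 * g (m + l - l + i.+1)%N x.
      rewrite -{1}(add0n m.+1) big_addn subSS addKn big_mkord.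
      apply: eq_bigr => i _; rewrite mxE.
      have -> : (i + m.+1 <= m)%N = false by lia.
      rewrite addnK valK /=; congr (_ * g _ x); lia.
    by rewrite S2 opprD addrA.
  have Hls := LS k beta'.
  rewrite /vnorm ler_sqrt in Hls; last by apply: sumr_ge0 => c _; exact: nsq_ge0.
  apply: (le_trans Hls).
  have HG : forall i : 'I_l, L2 mu D (g (k * l - l + i.+1)%N) by move=> i; apply: Lg; lia.
  under eq_bigr do rewrite Hres (proj_step mD HG (Lres _ _ _) (HX _).1).
  rewrite /a mulr_sumr; apply: ler_sum => c _.
  have := (HX c).2; rewrite -/(e c) -/(b c) => H.
  rewrite -/(e c); lra.
have hm : forall eps, 0 < eps -> exists N, forall n, (N <= n)%N -> muL (n * l)%N <= eps.
  move=> eps e0; have [N HN] := ev_of muL0 e0; exists N => n Nn.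
  have := HN (n * l)%N ltac:(nia); rewrite sub0r normrN => H.
  exact: le_trans (ler_norm _) (ltW H).
have m0 : forall k, (0 < k)%N -> 0 <= muL (k * l)%N.
  by move=> k k0; have /andP[] := muLb (k * l)%N ltac:(nia).
have conva := conv rr a0 m0 hm step.
apply/cvgrPdist_lt => eps e0.
have [N HN] := conva (eps ^+ 2) ltac:(by rewrite exprn_gt0).
exists N => // n /= Nn.
rewrite sub0r normrN ger0_norm ?sqrtr_ge0 // /vnorm.
rewrite -(ger0_norm (ltW e0)) -sqrtr_sqr ltr_sqrt ?exprn_gt0 //.
exact: HN.
Qed.
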